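(* Let $d$ be prime, $n\ge1$, and let $s,t\in\mathbb Z_d$ with $s,t\not\equiv0$ and $s^2+t^2\equiv1\pmod d$; let $\boxtimes=\boxtimes_{s,t}$ be the discrete beam splitter convolution, and define $\boxtimes^0\rho=\rho$, $\boxtimes^{N+1}\rho=(\boxtimes^N\rho)\boxtimes\rho$. If $\rho$ is a zero-mean $n$-qudit state, then for all $N\ge0$ $$\|\boxtimes^N\rho-\mathcal M(\rho)\|_2\le(1-MG(\rho))^N\|\rho-\mathcal M(\rho)\|_2 .$$ Moreover, if $\rho\neq\mathcal M(\rho)$ then $MG(\rho)>0$, so the convergence is exponentially fast.
   Context: Fix a prime $d$; $\chi(k)=e^{2\pi ik/d}$, $X|k\rangle=|k+1\rangle$, $Z|k\rangle=\chi(k)|k\rangle$ on $\mathbb C^d$; Weyl operators $w(p,q)=\chi(-2^{-1}pq)Z^pX^q$ (odd $d$), $w(p,q)=i^{-pq}Z^pX^q$ ($d=2$), $w(\vec p,\vec q)=\bigotimes_kw(p_k,q_k)$ for $(\vec p,\vec q)\in V^n=\mathbb Z_d^n\times\mathbb Z_d^n$; characteristic function $\Xi_\rho(\vec p,\vec q)=\mathrm{Tr}[\rho\,w(-\vec p,-\vec q)]$, support $\mathrm{Supp}(\Xi_\rho)=\{\vec x:\Xi_\rho(\vec x)\neq0\}$. The mean state $\mathcal M(\rho)$ has $\Xi_{\mathcal M(\rho)}(\vec x)=\Xi_\rho(\vec x)$ if $|\Xi_\rho(\vec x)|=1$ and $0$ otherwise; $\rho$ is zero-mean if $\Xi_{\mathcal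 M(\rho)}$ takes values only in $\{0,1\}$. Magic gap: $MG(\rho)=1-\max\{|\Xi_\rho(\vec x)|:\vec x\in\mathrm{Supp}(\Xi_\rho),|\Xi_\rho(\vec x)|\ne1\}$, with $MG(\rho)=0$ if the set is empty. Discrete beam splitter: the unitary $U_{s,t}|\vec i\rangle\otimes|\vec j\rangle=|s\vec i+t\vec j\rangle\otimes|t\vec i-s\vec j\rangle$ on $(\mathbb C^d)^{\otimes n}\otimes(\mathbb C^d)^{\otimes n}$, and $\rho\boxtimes_{s,t}\sigma=\mathrm{Tr}_B[U_{s,t}(\rho\otimes\sigma)U_{s,t}^\dagger]$; its characteristic function satisfies $\Xi_{\rho\boxtimes_{s,t}\sigma}(\vec x)=\Xi_\rho(s\vec x)\Xi_\sigma(t\vec x)$. $\|A\|_2=(\mathrm{Tr}A^\dagger A)^{1/2}$. *)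

(* Defs.v *)
(* operators on (C^d)^{\otimes n} are complex matrices over algC,
   indexed by the computational basis Z_d^n (functions 'I_n -> 'F_d). *)
From HB Require Import structures.
From mathcomp Require Import all_boot all_order all_algebra all_field.
Set Implicit Arguments. Unset Strict Implicit. Unset Printing Implicit Defensive.
Import Order.TTheory GRing.Theory Num.Theory.
Local Open Scope ring_scope.

Section Qudit.
Variables (d n : nat).

Definition Idx := {ffun 'I_n -> 'F_d}.
Definition PS := (Idx * Idx)%type.

Definition Op (T : finType) := T -> T -> algC.

Definition opmul (T : finType) (A B : Op T) : Op T :=
  fun x y => \sum_(z : T) A x z * B z y.
Definition opadj (T : finType) (A : Op T) : Op T := fun x y => (A y x)^*.
Definition optr (T : finType) (A : Op T) : algC := \sum_(x : T) A x x.
Definition opsub (T : finType) (A B : Op T) : Op T := fun x y => A x y - B x y.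
Definition kron (T1 T2 : finType) (A : Op T1) (B : Op T2) : Op (T1 * T2)%type :=
  fun x y => A x.1 y.1 * B x.2 y.2.
Definition ptrB (T1 T2 : finType) (A : Op (T1 * T2)%type) : Op T1 :=
  fun x y => \sum_(z : T2) A (x, z) (y, z).
Definition hsnorm (T : finType) (A : Op T) : algC := sqrtC (optr (opmul (opadj A) A)).

Definition is_state (T : finType) (rho : Op T) : Prop :=
  (forall v : T -> algC, 0 <= \sum_(x : T) \sum_(y : T) (v x)^* * rho x y * v y)
  /\ optr rho = 1.

(* chi(k) = e^{2 pi i k / d}; note d.-root (-1) = e^{i pi / d} *)
Definition omega : algC := (d.-root (-1)) ^+ 2.
Definition chi (k : 'F_d) : algC := omega ^+ (val k).

(* single-qudit Weyl operator w(p,q) as a matrix: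
   <x| Z^p X^q |y> = [x = y + q] chi(p x) *)
Definition wphase (p q : 'F_d) : algC :=
  if d == 2%N then 'i ^- (val p * val q)%N
  else chi (- ((2%:R)^-1 * p * q)).
Definition w1 (p q : 'F_d) : Op 'F_d :=
  fun x y => wphase p q * (x == y + q)%:R * chi (p * x).

Definition weyl (a : PS) : Op Idx :=
  fun x y => \prod_(k < n) w1 (a.1 k) (a.2 k) (x k) (y k).

Definition psopp (a : PS) : PS := ([ffun k => - a.1 k], [ffun k => - a.2 k]).

Definition charfn (rho : Op Idx) (a : PS) : algC := optr (opmul rho (weyl (psopp a))).

(* mean state: the operator whose characteristic function equals Xi_rho where
   |Xi_rho| = 1 and 0 elsewhere, written via the Weyl expansion
   sigma = d^{-n} sum_a Xi_sigma(a) w(a). *)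
Definition meanState (rho : Op Idx) : Op Idx :=
  fun x y => ((d ^ n)%:R)^-1 *
    \sum_(a : PS | `|charfn rho a| == 1) charfn rho a * weyl a x y.

Definition zero_mean (rho : Op Idx) : Prop :=
  forall a : PS, charfn (meanState rho) a = 0 \/ charfn (meanState rho) a = 1.

Definition magic_gap (rho : Op Idx) : algC :=
  if [exists a : PS, (charfn rho a != 0) && (`|charfn rho a| != 1)]
  then 1 - \big[Num.max/0]_(a : PS | (charfn rho a != 0) && (`|charfn rho a| != 1))
             `|charfn rho a|
  else 0.

Definition bsmap (s t : 'F_d) (ij : Idx * Idx) : Idx * Idx :=
  ([ffun k => s * ij.1 k + t * ij.2 k], [ffun k => t * ij.1 k - s * ij.2 k]).
Definition beamU (s t : 'F_d) : Op (Idx * Idx)%type :=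
  fun x y => (x == bsmap s t y)%:R.

Definition bconv (s t : 'F_d) (rho sigma : Op Idx) : Op Idx :=
  ptrB (opmul (opmul (beamU s t) (kron rho sigma)) (opadj (beamU s t))).

Fixpoint bconv_pow (s t : 'F_d) (N : nat) (rho : Op Idx) : Op Idx :=
  match N with
  | O => rho
  | S N' => bconv s t (bconv_pow s t N' rho) rho
  end.

End Qudit.

(* Main.v *)
Require Import Defs.
From mathcomp Require Import all_boot all_order all_algebra all_field.
From mathcomp Require Import ring.
From Stdlib Require Import FunctionalExtensionality.
Import Order.TTheory GRing.Theory Num.Theory.
Local Open Scope ring_scope.
Set Implicit Arguments. Unset Strict Implicit. Unset Printing Implicit Defensive.

Lemma sum_delta (T : finType) (z0 : T) (G : T -> algC) :
  \sum_z (z == z0)%:R * G z = G z0.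
Proof.
rewrite (bigD1 z0) //= eqxx mul1r big1 ?addr0 // => z /negbTE ->; by rewrite mul0r.
Qed.

Lemma sum_delta' (T : finType) (z0 : T) (G : T -> algC) :
  \sum_z G z * (z == z0)%:R = G z0.
Proof. by rewrite -[RHS](sum_delta z0); apply: eq_bigr => z _; rewrite mulrC. Qed.

Section State.
Variables (T : finType) (rho : Op T).
Hypothesis st : is_state rho.

Definition Bf (u v : T -> algC) := \sum_x \sum_z (u x)^* * rho x z * v z.
Definition ev (x : T) : T -> algC := fun t => (t == x)%:R.

Lemma Bf_ge0 v : 0 <= Bf v v. Proof. exact: st.1. Qed.

Lemma BfDl u u' v : Bf (fun t => u t + u' t) v = Bf u v + Bf u' v.
Proof.
rewrite /Bf -big_split; apply: eq_bigr => x _; rewrite -big_split.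
by apply: eq_bigr => z _; rewrite rmorphD !mulrDl.
Qed.
Lemma BfDr u v v' : Bf u (fun t => v t + v' t) = Bf u v + Bf u v'.
Proof.
rewrite /Bf -big_split; apply: eq_bigr => x _; rewrite -big_split.
by apply: eq_bigr => z _; rewrite !mulrDr.
Qed.
Lemma BfZl c u v : Bf (fun t => c * u t) v = c^* * Bf u v.
Proof.
rewrite /Bf mulr_sumr; apply: eq_bigr => x _; rewrite mulr_sumr.
by apply: eq_bigr => z _; rewrite rmorphM !mulrA.
Qed.
Lemma BfZr c u v : Bf u (fun t => c * v t) = c * Bf u v.
Proof.
rewrite /Bf mulr_sumr; apply: eq_bigr => x _; rewrite mulr_sumr.
by apply: eq_bigr => z _; rewrite mulrCA.
Qed.
Lemma Bf_el x v : Bf (ev x) v = \sum_z rho x z * v z.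
Proof.
rewrite /Bf /ev; under eq_bigr do rewrite rmorph_nat.
rewrite -(sum_delta x (fun x' => \sum_z rho x' z * v z)).
by apply: eq_bigr => x' _; rewrite mulr_sumr; apply: eq_bigr => z _; rewrite mulrA.
Qed.
Lemma Bf_ee x z : Bf (ev x) (ev z) = rho x z.
Proof. by rewrite Bf_el /ev sum_delta'. Qed.

Lemma Bf_real v : Bf v v \is Num.real. Proof. exact: ger0_real (Bf_ge0 v). Qed.

Lemma herm x z : rho x z = (rho z x)^*.
Proof.
have R1 := Bf_real (fun t => ev x t + ev z t).
have R2 := Bf_real (fun t => ev x t + 'i * ev z t).
rewrite !BfDl !BfDr !BfZl !BfZr !Bf_ee conjCi in R1 R2.
have Rx := Bf_real (ev x); have Rz := Bf_real (ev z); rewrite !Bf_ee in Rx Rz.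
move: R1 R2 Rx Rz; rewrite !CrealE => /eqP R1 /eqP R2 /eqP Rx /eqP Rz.
set a := rho x z in R1 R2 *; set b := rho z x in R1 R2 *.
set u := rho x x in R1 R2 Rx; set w := rho z z in R1 R2 Rz.
rewrite !rmorphD !rmorphM /= ?rmorphN /= conjCi Rx Rz in R1 R2.
have h1 : (u + a^* + (b^* + w)) - (u + a + (b + w)) = 0 by rewrite R1 subrr.
have h2 : (u + - 'i * a^* + (- - 'i * b^* + - - 'i * (- 'i * w))) -
    (u + 'i * a + (- 'i * b + - 'i * ('i * w))) = 0 by rewrite R2 subrr.
have E2 : b^* - a^* - (a - b) = 0.
  suff /eqP : (b^* - a^* - (a - b)) * 'i = 0.
    by rewrite mulf_eq0 (negbTE (neq0Ci _)) orbF => /eqP.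
  suff -> : (b^* - a^* - (a - b)) * 'i = (u + - 'i * a^* + (- - 'i * b^* + - - 'i * (- 'i * w))) -
    (u + 'i * a + (- 'i * b + - 'i * ('i * w))) by rewrite h2.
  ring.
have : (a - b^*) * 2%:R = 0.
  transitivity (- ((u + a^* + (b^* + w)) - (u + a + (b + w))) - (b^* - a^* - (a - b))); first ring.
  by rewrite h1 E2 oppr0 addr0.
by move/eqP; rewrite mulf_eq0 pnatr_eq0 orbF subr_eq0 => /eqP.
Qed.

Lemma Bf_herm u v : Bf v u = (Bf u v)^*.
Proof.
rewrite /Bf rmorph_sum exchange_big /=; apply: eq_bigr => z _.
rewrite rmorph_sum; apply: eq_bigr => x _; rewrite !rmorphM /= conjCK (herm x z).
ring.
Qed.

Lemma null v : Bf v v = 0 -> forall u, Bf u v = 0.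
Proof.
move=> v0 u; set b := Bf u v; set q := Bf u u; set r := (q + 1)^-1.
have q0 : 0 <= q := Bf_ge0 u.
have r0 : 0 < r by rewrite invr_gt0 ltr_wpDl.
have rR : r^* = r by apply/eqP; rewrite -CrealE ger0_real // ltW.
have H := Bf_ge0 (fun t => v t + (- (b * r)) * u t).
rewrite !BfDl !BfDr !BfZl !BfZr v0 (Bf_herm u v) -/b -/q in H.
rewrite !rmorphN rmorphM /= rR in H.
have E : 0 + - (b * r) * b^* + (- (b^* * r) * b + - (b^* * r) * (- (b * r) * q))
     = (`|b| ^+ 2 * r) * (r * q - 2%:R).
  by rewrite normCK; ring.
rewrite E in H.
have rq : r * q - 2%:R < 0.
  rewrite subr_lt0 (@le_lt_trans _ _ 1) ?ltr1n //.
  by rewrite mulrC ler_pdivrMr ?ltr_wpDl // mul1r lerDl.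
move: H; rewrite nmulr_lge0 // pmulr_lle0 // => h.
have : `|b| ^+ 2 = 0 by apply/eqP; rewrite eq_le h exprn_ge0.
by move/eqP; rewrite expf_eq0 /= normr_eq0 => /eqP.
Qed.

Variable U : Op T.
Hypothesis hU : forall z x, \sum_j (U j z)^* * U j x = (z == x)%:R.

Definition tau := \sum_x \sum_z rho x z * U z x.
Definition cU (j : T) : T -> algC := fun t => (U j t)^*.

Lemma sig_tau : \sum_j \sum_z rho j z * (U j z)^* = tau^*.
Proof.
rewrite /tau rmorph_sum exchange_big /=; apply: eq_bigr => j _.
rewrite rmorph_sum; apply: eq_bigr => z _; by rewrite rmorphM /= -herm.
Qed.

Lemma Qsum mu : \sum_j Bf (fun t => ev j t + mu * cU j t) (fun t => ev j t + mu * cU j t)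
   = 1 + mu * tau^* + mu^* * tau + mu^* * mu.
Proof.
under eq_bigr do rewrite !BfDl !BfDr !BfZl !BfZr.
rewrite !big_split /= -!mulr_sumr -!addrA; congr (_ + _).
  by under eq_bigr do rewrite Bf_ee; exact: st.2.
congr (_ + _).
  by congr (_ * _); rewrite -sig_tau; apply: eq_bigr => j _; rewrite Bf_el.
congr (_ + _).
  congr (_ * _); under eq_bigr do rewrite Bf_herm Bf_el.
  by rewrite -rmorph_sum /cU sig_tau; exact: conjCK.
rewrite mulrA -[RHS]mulr1; congr (_ * _).
rewrite /Bf /cU.
rewrite exchange_big /=; rewrite -[RHS](st.2); apply: eq_bigr => x _.
rewrite exchange_big /=; rewrite -(sum_delta' x (fun z => rho x z)).
apply: eq_bigr => z _.
have -> : (z == x)%:R = ((x == z)%:R)^* :> algC by rewrite rmorph_nat eq_sym.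
rewrite -hU rmorph_sum mulr_sumr; apply: eq_bigr => j _.
by rewrite rmorphM /= conjCK; ring.
Qed.

Lemma tau_fix : tau = 1 -> forall x j, rho x j = \sum_z rho x z * (U j z)^*.
Proof.
move=> t1 x j.
have Q0 := Qsum (-1); rewrite t1 rmorphN1 rmorph1 in Q0.
have : \sum_j Bf (fun t => ev j t + -1 * cU j t) (fun t => ev j t + -1 * cU j t) = 0.
  by rewrite Q0; ring.
move/psumr_eq0P => /(_ (fun j _ => Bf_ge0 _) j isT) /null /(_ (ev x)).
rewrite BfDr BfZr Bf_ee Bf_el => /eqP; rewrite mulN1r subr_eq0 => /eqP ->.
by [].
Qed.

Lemma tau_le1 : `|tau| <= 1.
Proof.
have [->|t0] := eqVneq tau 0; first by rewrite normr0 ler01.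
set nu := `|tau|.
have nu0 : nu != 0 by rewrite normr_eq0.
have nuR : nu^* = nu by apply/eqP; rewrite -CrealE normr_real.
have tc : tau^* = nu ^+ 2 / tau by rewrite normCK [tau * _]mulrC mulfK.
have H : 0 <= \sum_j Bf (fun t => ev j t + (- (tau / nu)) * cU j t)
                      (fun t => ev j t + (- (tau / nu)) * cU j t).
  by apply: sumr_ge0 => j _; exact: Bf_ge0.
rewrite Qsum !rmorphN rmorphM /= fmorphV /= nuR tc in H.
have E : 1 + - (tau / nu) * (nu ^+ 2 / tau) + - (nu ^+ 2 / tau / nu) * tau +
      - (nu ^+ 2 / tau / nu) * - (tau / nu) = 2%:R * (1 - nu).
  by field; rewrite nu0 t0.
rewrite E pmulr_rge0 ?ltr0n // subr_ge0 in H; exact: H.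
Qed.
End State.

Section Proofs.
Variables (d n : nat).
Hypothesis d_pr : prime d.
Hypothesis d_n2 : d != 2%N.

Local Notation F := 'F_d.
Local Notation V := {ffun 'I_n -> 'F_d}.

Lemma d_gt2 : (2 < d)%N.
Proof. by have := prime_gt1 d_pr; rewrite leq_eqVlt eq_sym (negbTE d_n2). Qed.
Lemma d_gt0 : (0 < d)%N. Proof. exact: prime_gt0. Qed.

Lemma omega_d : omega d ^+ d = 1.
Proof.
by rewrite /omega -exprM mulnC exprM rootCK ?d_gt0 // expr2 mulrNN mulr1.
Qed.

Lemma omega_neq1 : omega d != 1.
Proof.
rewrite /omega sqrf_eq1; apply/negP => /orP[] /eqP E.
- have := rootCK d_gt0 (-1 : algC); rewrite /= E expr1n => /eqP.
  by rewrite -subr_eq0 opprK -(natrD _ 1 1) pnatr_eq0.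
- have := @rootC_lt0 algC d (-1) (ltnW d_gt2); by rewrite E ltrN10.
Qed.

Lemma omega_prim : d.-primitive_root (omega d).
Proof.
have [m pm md] := prim_order_exists d_gt0 omega_d.
case/primeP: d_pr => _ /(_ m md) /orP[/eqP m1 | /eqP mE]; last by move: pm; rewrite mE.
have := omega_neq1; move: pm; rewrite m1 => /prim_expr_order.
by rewrite expr1 => ->; rewrite eqxx.
Qed.

Lemma chi_nat m : chi (m%:R : F) = omega d ^+ m.
Proof.
rewrite /chi; change (val (m%:R : F)) with (nat_of_ord (m%:R : F)).
by rewrite val_Fp_nat // prim_expr_mod // omega_prim.
Qed.

Lemma chiD (a b : F) : chi (a + b) = chi a * chi b.
Proof. by rewrite -[a]natr_Zp -[b]natr_Zp -natrD !chi_nat exprD. Qed.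

Lemma chi0 : chi (0 : F) = 1.
Proof. by rewrite -[0 : F]/(0%:R) chi_nat expr0. Qed.

Lemma chiN (a : F) : chi (- a) * chi a = 1.
Proof. by rewrite -chiD addNr chi0. Qed.

Lemma chi_neq0 (a : F) : chi a != 0.
Proof. by apply/negP => /eqP E; have := chiN a; rewrite E mulr0 => /eqP; rewrite eq_sym oner_eq0. Qed.

Lemma norm_omega : `|omega d| = 1.
Proof.
apply/eqP; rewrite -(pexpr_eq1 d_gt0) // -normrX omega_d normr1 //.
Qed.

Lemma chi_conj (a : F) : (chi a)^* = chi (- a).
Proof.
have h : (chi a)^* * chi a = 1.
  by rewrite mulrC -normCK /chi normrX norm_omega expr1n expr1n.
apply: (mulIf (chi_neq0 a)); by rewrite h chiN.
Qed.

Lemma norm_chi (a : F) : `|chi a| = 1.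
Proof. by rewrite /chi normrX norm_omega expr1n. Qed.

Lemma chi_eq1 (c : F) : (chi c == 1) = (c == 0).
Proof.
rewrite /chi -(prim_order_dvd omega_prim).
case: (eqVneq c 0) => [->|cn0]; first by rewrite dvdn0.
apply: gtnNdvd; first by rewrite lt0n; apply: contraNneq cn0 => h; apply/eqP; exact: val_inj.
by have := ltn_ord c; rewrite [X in (_ < X)%N -> _]Fp_cast.
Qed.

Lemma sum_chi (c : F) :
  \sum_(k : F) chi (c * k) = if c == 0 then (d%:R : algC) else 0.
Proof.
case: eqP => [->|/eqP cn0].
  by under eq_bigr do rewrite mul0r chi0; rewrite sumr_const card_Fp.
set S := \sum_(k : F) _.
have h : chi c * S = S.
  rewrite /S mulr_sumr [RHS](reindex_inj (addIr (1 : F))) /=.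
  by apply: eq_bigr => k _; rewrite -chiD mulrDr mulr1 addrC.
have : (chi c - 1) * S = 0 by rewrite mulrBl h mul1r subrr.
by move/eqP; rewrite mulf_eq0 subr_eq0 chi_eq1 (negbTE cn0) => /eqP.
Qed.

Lemma chi_sum (I : Type) (r : seq I) (P : pred I) (G : I -> F) :
  chi (\sum_(i <- r | P i) G i) = \prod_(i <- r | P i) chi (G i).
Proof. exact: (big_morph _ chiD chi0). Qed.

Definition dot (u v : V) : F := \sum_k u k * v k.
Definition vsc (c : F) (u : V) : V := [ffun k => c * u k].

Lemma dotC (u v : V) : dot u v = dot v u.
Proof. by apply: eq_bigr => k _; rewrite mulrC. Qed.
Lemma dotDl (u v w : V) : dot (u + v) w = dot u w + dot v w.
Proof. by rewrite /dot -big_split; apply: eq_bigr => k _; rewrite ffunE mulrDl. Qed.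
Lemma dotDr (u v w : V) : dot u (v + w) = dot u v + dot u w.
Proof. by rewrite dotC dotDl !(dotC _ u). Qed.
Lemma dotZl (c : F) (u v : V) : dot (vsc c u) v = c * dot u v.
Proof. by rewrite /dot mulr_sumr; apply: eq_bigr => k _; rewrite ffunE mulrA. Qed.
Lemma dotZr (c : F) (u v : V) : dot u (vsc c v) = c * dot u v.
Proof. by rewrite dotC dotZl dotC. Qed.
Lemma dotNl (u v : V) : dot (- u) v = - dot u v.
Proof. by rewrite /dot -sumrN; apply: eq_bigr => k _; rewrite ffunE mulNr. Qed.
Lemma dotNr (u v : V) : dot u (- v) = - dot u v.
Proof. by rewrite dotC dotNl dotC. Qed.
Lemma dotBl (u v w : V) : dot (u - v) w = dot u w - dot v w.
Proof. by rewrite dotDl dotNl. Qed.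
Lemma dotBr (u v w : V) : dot u (v - w) = dot u v - dot u w.
Proof. by rewrite dotDr dotNr. Qed.
Lemma dot0l (v : V) : dot 0 v = 0.
Proof. by rewrite /dot big1 // => k _; rewrite ffunE mul0r. Qed.
Lemma dot0r (v : V) : dot v 0 = 0.
Proof. by rewrite dotC dot0l. Qed.

Lemma ffun_neq0 (v : V) : v != 0 -> exists k, v k != 0.
Proof.
move=> vn0; case: (pickP (fun k => v k != 0)) => [k vk | all0]; first by exists k.
case/negP: vn0; apply/eqP/ffunP => k; rewrite ffunE.
by apply/eqP; rewrite -[_ == _]negbK; rewrite all0.
Qed.

Lemma sum_chi_vec (v : V) :
  \sum_(x : V) chi (dot v x) = if v == 0 then ((d ^ n)%N%:R : algC) else 0.
Proof.
under eq_bigr do rewrite chi_sum.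
rewrite -(bigA_distr_bigA (fun k z => chi (v k * z))) /=.
under eq_bigr do rewrite sum_chi.
case: eqP => [->|/eqP vn0].
  rewrite (eq_bigr (fun _ => d%:R)) => [|k _]; last by rewrite ffunE eqxx.
  by rewrite prodr_const card_ord natrX.
have [k vk] := ffun_neq0 vn0.
by rewrite (bigD1 k) //= (negbTE vk) mul0r.
Qed.

Lemma prod_eqind (x z : V) :
  \prod_k ((x k == z k)%:R : algC) = (x == z)%:R.
Proof.
case: (eqVneq x z) => [->|xz]; first by rewrite big1 // => k _; rewrite eqxx.
case: (pickP (fun k => x k != z k)) => [k xk | all0].
  by rewrite (bigD1 k) //= (negbTE xk) mul0r.
case/negP: xz; apply/eqP/ffunP => k; apply/eqP; by rewrite -[_ == _]negbK all0.
Qed.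

Definition phi (p q : V) : algC := chi (- (2%:R^-1 * dot p q)).

Lemma weylE (a : V * V) x y :
  weyl a x y = phi a.1 a.2 * (x == y + a.2)%:R * chi (dot a.1 x).
Proof.
have E : \prod_k ((x k == y k + a.2 k)%:R : algC) = (x == y + a.2)%:R.
  by rewrite -prod_eqind; apply: eq_bigr => k _; rewrite ffunE.
rewrite /weyl /w1 /wphase (negbTE d_n2) !big_split /= E.
congr (_ * _ * _); last by rewrite /dot chi_sum.
rewrite /phi /dot mulr_sumr -sumrN chi_sum.
by apply: eq_bigr => k _; rewrite mulrA.
Qed.

Lemma two_neq0 : (2%:R : F) != 0.
Proof.
apply/negP => /eqP h; have := val_Fp_nat d_pr 2; rewrite h /= modn_small ?d_gt2 //.
Qed.

Definition psc (c : F) (a : V * V) : V * V := (vsc c a.1, vsc c a.2).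

Lemma psoppE (a : V * V) : psopp a = (- a.1, - a.2).
Proof. by rewrite /psopp; congr (_, _); apply/ffunP => k; rewrite !ffunE. Qed.

Lemma phiN (p q : V) : phi (- p) (- q) = phi p q.
Proof. by rewrite /phi dotNl dotNr opprK. Qed.

Lemma charfnE (A : Op (Idx d n)) (a : V * V) :
  charfn A a = phi a.1 a.2 * \sum_(y : V) A (y + a.2) y * chi (- dot a.1 y).
Proof.
rewrite /charfn /optr /opmul psoppE.
transitivity (\sum_(x : V) A x (x - a.2) * (phi a.1 a.2 * chi (- dot a.1 (x - a.2)))).
  apply: eq_bigr => x _; rewrite (bigD1 (x - a.2)) //= big1 ?addr0 => [|z zne].
    by rewrite weylE /= eqxx mulr1 phiN dotNl.
  by rewrite weylE /= (negbTE zne) mulr0 mul0r mulr0.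
rewrite (reindex_inj (addIr a.2)) mulr_sumr; apply: eq_bigr => y _ /=.
by rewrite addrK mulrCA.
Qed.

Lemma weyl_mul (a : V * V) (c : F) x y :
  opmul (weyl a) (weyl (psc c a)) x y = weyl (psc (1 + c) a) x y.
Proof.
rewrite /opmul.
transitivity (\sum_(z : V) (z == x - a.2)%:R *
   (phi a.1 a.2 * chi (dot a.1 x) * weyl (psc c a) z y)).
  apply: eq_bigr => z _; rewrite weylE.
  have -> : (x == z + a.2) = (z == x - a.2) by rewrite [RHS]eq_sym subr_eq.
  by rewrite -!mulrA mulrCA.
rewrite sum_delta !weylE /=.
have -> : (x - a.2 == y + vsc c a.2) = (x == y + vsc (1 + c) a.2).
  rewrite subr_eq; congr (_ == _); apply/ffunP => k; rewrite !ffunE; ring.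
set I := (_ == _)%:R.
have h : forall A B C D : algC, A * B * (C * I * D) = (A * B * C * D) * I.
  by move=> *; ring.
rewrite /phi h -!chiD [RHS]mulrAC -chiD !dotZl !dotZr dotBr; congr (chi _ * _).
field; exact: two_neq0.
Qed.

Lemma conj_weyl (a : V * V) x y :
  (weyl a x y)^* = weyl (- a.1, - a.2) y x.
Proof.
rewrite !weylE /= !rmorphM /= rmorph_nat !chi_conj phiN.
have -> : (y == x + - a.2) = (x == y + a.2) by rewrite eq_sym subr_eq.
case: eqP => [->|_] /=; last by rewrite !mulr0 !mul0r.
rewrite !mulr1 /phi -!chiD dotNl dotDr; congr chi.
field; exact: two_neq0.
Qed.

Lemma weyl0 x y : weyl ((0 : V), (0 : V)) x y = (x == y)%:R.
Proof. by rewrite weylE /phi /= !dot0l mulr0 oppr0 chi0 mul1r mulr1 addr0. Qed.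

Lemma psc0 (a : V * V) : psc 0 a = (0, 0).
Proof. by rewrite /psc; congr (_, _); apply/ffunP => k; rewrite !ffunE mul0r. Qed.

Lemma psc_opp (a : V * V) : psc (-1) (- a.1, - a.2) = a.
Proof.
by case: a => p q; rewrite /psc; congr (_, _); apply/ffunP => k; rewrite !ffunE mulN1r opprK.
Qed.

Lemma psoppsc (c : F) (a : V * V) : psopp (psc c a) = psc (- c) a.
Proof. by rewrite /psopp /psc; congr (_, _); apply/ffunP => k; rewrite !ffunE mulNr. Qed.

Lemma weyl_unitary (b : V * V) z x :
  \sum_j (weyl b j z)^* * weyl b j x = (z == x)%:R.
Proof.
under eq_bigr do rewrite conj_weyl.
have := weyl_mul (- b.1, - b.2) (-1) z x; rewrite psc_opp addrN psc0 weyl0.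
by move=> <-.
Qed.

Section StateW.
Variable rho : Op (Idx d n).
Hypothesis st : is_state rho.

Lemma charfn_tau a : charfn rho a = tau rho (weyl (psopp a)).
Proof. by []. Qed.

Lemma charfn_le1 a : `|charfn rho a| <= 1.
Proof. by rewrite charfn_tau; apply: tau_le1 => //; exact: weyl_unitary. Qed.

Lemma charfn1_fix a : charfn rho a = 1 -> forall x y, opmul rho (weyl a) x y = rho x y.
Proof.
rewrite charfn_tau => /(tau_fix st (weyl_unitary _)) h x y.
rewrite h; apply: eq_bigr => z _; rewrite conj_weyl psoppE /= !opprK.
by rewrite -surjective_pairing.
Qed.

Lemma pow_fix a : (forall x y, opmul rho (weyl a) x y = rho x y) ->
  forall k : nat, forall x y, opmul rho (weyl (psc k%:R a)) x y = rho x y.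
Proof.
move=> h; elim=> [|k IH] x y.
  by rewrite psc0 /opmul; under eq_bigr do rewrite weyl0; rewrite sum_delta'.
transitivity (opmul (opmul rho (weyl a)) (weyl (psc k%:R a)) x y).
  rewrite mulrS /opmul; under eq_bigr do rewrite -(weyl_mul a k%:R) /opmul mulr_sumr.
  rewrite exchange_big /=; apply: eq_bigr => z _; rewrite mulr_suml.
  by apply: eq_bigr => w _; rewrite mulrA.
rewrite -IH; apply: eq_bigr => z _; by rewrite h.
Qed.

Lemma charfn_scale1 a : charfn rho a = 1 -> forall c, charfn rho (psc c a) = 1.
Proof.
move=> h1 c; have h := pow_fix (charfn1_fix h1) (val (- c)).
rewrite natr_Zp in h.
rewrite /charfn psoppsc /optr -st.2; apply: eq_bigr => x _; exact: h.
Qed.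
End StateW.

Lemma charfn_sub (A B : Op (Idx d n)) a : charfn (opsub A B) a = charfn A a - charfn B a.
Proof.
rewrite /charfn /optr /opmul /opsub -sumrB; apply: eq_bigr => x _.
by rewrite -sumrB; apply: eq_bigr => z _; rewrite mulrBl.
Qed.

Lemma charfn_weyl (a b : V * V) :
  charfn (weyl a) b = if a == b then ((d ^ n)%N%:R : algC) else 0.
Proof.
rewrite charfnE; under eq_bigr do rewrite weylE.
case: a => p q; case: b => p' q' /=.
have -> : ((p, q) == (p', q')) = (q' == q) && (p == p').
  by rewrite xpair_eqE andbC eq_sym.
have hq : forall y : V, (y + q' == y + q) = (q' == q).
  by move=> y; apply/eqP/eqP => [/addrI|->].
under eq_bigr do rewrite hq.
case: (eqVneq q' q) => [->|] /=; last first.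
  by rewrite big1 ?mulr0 // => y _; rewrite !(mulr0, mul0r).
transitivity (phi p' q * phi p q * chi (dot p q) * \sum_(y : V) chi (dot (p - p') y)).
  rewrite -!mulrA; congr (_ * _); rewrite !mulr_sumr; apply: eq_bigr => y _.
  by rewrite dotDr chiD dotBl chiD; ring.
rewrite sum_chi_vec subr_eq0; case: eqP => [->|_]; last by rewrite mulr0.
have -> : phi p' q * phi p' q * chi (dot p' q) = 1.
  rewrite /phi -!chiD.
  have -> : (- (2%:R^-1 * dot p' q) + - (2%:R^-1 * dot p' q) + dot p' q) = 0.
    by field; exact: two_neq0.
  exact: chi0.
by rewrite mul1r.
Qed.

Lemma charfn_mean (rho : Op (Idx d n)) b :
  charfn (meanState rho) b = if `|charfn rho b| == 1 then charfn rho b else 0.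
Proof.
transitivity (((d ^ n)%N%:R)^-1 *
   \sum_(a | `|charfn rho a| == 1) charfn rho a * charfn (weyl a) b).
  rewrite {1}/charfn /optr /opmul /meanState.
  set c := ((d ^ n)%N%:R)^-1.
  transitivity (\sum_(x : Idx d n) \sum_(a | `|charfn rho a| == 1) \sum_(z : Idx d n)
     c * charfn rho a * (weyl a x z * weyl (psopp b) z x)).
    apply: eq_bigr => x _; rewrite exchange_big /=; apply: eq_bigr => z _.
    rewrite mulr_sumr mulr_suml; apply: eq_bigr => a _; ring.
  rewrite exchange_big /= mulr_sumr; apply: eq_bigr => a _.
  rewrite mulrA [charfn (weyl a) b]/charfn /optr /opmul mulr_sumr.
  rewrite [RHS]mulr_sumr; apply: eq_bigr => x _; by rewrite mulr_sumr.
under eq_bigr do rewrite charfn_weyl.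
rewrite big_mkcond (bigD1 b) //= eqxx big1 ?addr0 => [|a ab]; last first.
  by rewrite (negbTE ab) mulr0 if_same.
case: ifP => _; last by rewrite mulr0.
rewrite mulrC -mulrA mulfV ?mulr1 // pnatr_eq0 expn_eq0 negb_and.
by rewrite -lt0n d_gt0.
Qed.


Section Beam.
Variables (s t : F).
Hypothesis hst : s ^+ 2 + t ^+ 2 = 1.

Local Notation bs := (@bsmap d n s t).

Lemma bs_inv (w : V * V) : bs (bs w) = w.
Proof.
case: w => i j; rewrite /bsmap /=; congr (_, _); apply/ffunP => k; rewrite !ffunE.
  by transitivity ((s ^+ 2 + t ^+ 2) * i k); [ring | rewrite hst mul1r].
by transitivity ((s ^+ 2 + t ^+ 2) * j k); [ring | rewrite hst mul1r].
Qed.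

Lemma bs_inj : injective bs.
Proof. exact: (can_inj bs_inv). Qed.

Lemma bconvE (A B : Op (Idx d n)) x y :
  bconv s t A B x y =
  \sum_(z : V) A (bs (x, z)).1 (bs (y, z)).1 * B (bs (x, z)).2 (bs (y, z)).2.
Proof.
rewrite /bconv /ptrB /opmul /beamU /opadj /kron; apply: eq_bigr => z _.
have hb : forall X u : V * V, (X == bs u) = (u == bs X).
  by move=> X u; apply/eqP/eqP => ->; rewrite bs_inv.
under eq_bigr do rewrite rmorph_nat mulr_suml.
rewrite -(sum_delta' (bs (y, z)) (fun w => A (bs (x, z)).1 w.1 * B (bs (x, z)).2 w.2)).
apply: eq_bigr => w _; rewrite hb -mulr_suml; congr (_ * _).
under eq_bigr do rewrite hb.
exact: (sum_delta (bs (x, z)) (fun u => A u.1 w.1 * B u.2 w.2)).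
Qed.

Lemma phi_st (p q : V) : phi (vsc s p) (vsc s q) * phi (vsc t p) (vsc t q) = phi p q.
Proof.
rewrite /phi -chiD !dotZl !dotZr; congr chi.
transitivity (- (2%:R^-1 * ((s ^+ 2 + t ^+ 2) * dot p q))); first ring.
by rewrite hst mul1r.
Qed.

Lemma charfn_bconv (A B : Op (Idx d n)) a :
  charfn (bconv s t A B) a = charfn A (psc s a) * charfn B (psc t a).
Proof.
rewrite !charfnE /psc /= -phi_st.
set P1 := phi _ _; set P2 := phi _ _.
rewrite -!mulrA; congr (_ * _); rewrite [RHS]mulrCA; congr (_ * _).
under eq_bigr do rewrite bconvE mulr_suml.
rewrite pair_bigA (reindex_inj bs_inj).
rewrite mulr_suml; under [RHS]eq_bigr do rewrite mulr_sumr.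
rewrite [RHS]pair_bigA /=; apply: eq_bigr => -[u v] _.
have e1 : forall x : F, x = (s ^+ 2 + t ^+ 2) * x by move=> x; rewrite hst mul1r.
rewrite [RHS]mulrACA -chiD.
congr (_ * _ * _); [congr (A _ _) | congr (B _ _) | congr chi];
  try (apply/ffunP => k; rewrite !ffunE /=;
       first [rewrite [u k in RHS]e1 | rewrite [v k in RHS]e1]; ring).
rewrite -opprD; congr (- _); rewrite !dotZl /dot !mulr_sumr -big_split.
by apply: eq_bigr => k _ /=; rewrite ffunE; ring.
Qed.
End Beam.

Lemma plancherel (f : V -> algC) :
  \sum_(p : V) `|\sum_(y : V) f y * chi (- dot p y)| ^+ 2
   = ((d ^ n)%N%:R) * \sum_(y : V) `|f y| ^+ 2.
Proof.
transitivity (\sum_(p : V) \sum_(y : V) \sum_(y' : V) f y * (f y')^* * chi (dot (y' - y) p)).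
  apply: eq_bigr => p _; rewrite normCK rmorph_sum mulr_suml; apply: eq_bigr => y _.
  rewrite mulr_sumr; apply: eq_bigr => y' _; rewrite rmorphM /= chi_conj opprK.
  by rewrite dotBl !(dotC _ p) chiD; ring.
rewrite exchange_big /=; under eq_bigr do rewrite exchange_big /=.
under eq_bigr do under eq_bigr do rewrite -mulr_sumr sum_chi_vec subr_eq0.
rewrite mulr_sumr; apply: eq_bigr => y _.
rewrite (bigD1 y) //= eqxx big1 ?addr0 => [|y' /negbTE ->]; last by rewrite mulr0.
by rewrite normCK; ring.
Qed.

Definition HS (A : Op (Idx d n)) := \sum_(x : V) \sum_(y : V) `|A x y| ^+ 2.

Lemma parseval (A : Op (Idx d n)) :
  \sum_(a : V * V) `|charfn A a| ^+ 2 = ((d ^ n)%N%:R) * HS A.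
Proof.
under eq_bigr do rewrite charfnE normrM exprMn /phi norm_chi expr1n mul1r.
transitivity (\sum_(p : V) \sum_(q : V) `|\sum_(y : V) A (y + q) y * chi (- dot p y)| ^+ 2).
  by rewrite pair_bigA.
rewrite exchange_big /=; under eq_bigr do rewrite (plancherel (fun y => A (y + _) y)).
rewrite -mulr_sumr; congr (_ * _); rewrite exchange_big /= /HS [RHS]exchange_big /=.
apply: eq_bigr => y _; by rewrite [RHS](reindex_inj (addrI y)).
Qed.

Lemma hsnormE (A : Op (Idx d n)) : hsnorm A = sqrtC (HS A).
Proof.
rewrite /hsnorm /optr /opmul /opadj /HS exchange_big /=; congr sqrtC.
apply: eq_bigr => x _; apply: eq_bigr => y _; by rewrite normCK mulrC.
Qed.

Lemma HS_ge0 (A : Op (Idx d n)) : 0 <= HS A.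
Proof. by apply: sumr_ge0 => x _; apply: sumr_ge0 => y _; exact: exprn_ge0. Qed.

Lemma pscM (c c' : F) (a : V * V) : psc c (psc c' a) = psc (c * c') a.
Proof. by rewrite /psc; congr (_, _); apply/ffunP => k; rewrite !ffunE mulrA. Qed.
Lemma psc1 (a : V * V) : psc 1 a = a.
Proof. by case: a => p q; rewrite /psc; congr (_, _); apply/ffunP => k; rewrite !ffunE mul1r. Qed.
Lemma psc_inj (c : F) : c != 0 -> injective (psc c).
Proof.
move=> c0; apply: (can_inj (g := psc c^-1)) => a; by rewrite pscM mulVf // psc1.
Qed.

Lemma maxE (x y : algC) : Num.max x y = if x < y then y else x.
Proof. by []. Qed.

Lemma bigmax_ge0 (I : Type) (r : seq I) (P : pred I) (G : I -> algC) :
  (forall i, 0 <= G i) -> 0 <= \big[Num.max/0]_(i <- r | P i) G i.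
Proof.
move=> hG; apply: (big_ind (fun z => 0 <= z)) => //; try (by move=> *; exact: hG).
by move=> x y x0 y0; rewrite maxE; case: ifP.
Qed.

Lemma bigmax_ub (I : eqType) (r : seq I) (P : pred I) (G : I -> algC) b :
  (forall i, 0 <= G i) -> b \in r -> P b -> G b <= \big[Num.max/0]_(i <- r | P i) G i.
Proof.
move=> hG; elim: r => // x r IH; rewrite inE big_cons => /orP [/eqP <- | br] Pb.
  by rewrite Pb maxE; case: ifP => [/ltW|_] //.
have h := IH br Pb; case: ifP => _ //; rewrite maxE; case: ifP => // /negbT.
rewrite real_ltNge ?negbK ?ger0_real ?hG ?bigmax_ge0 // => h'.
exact: le_trans h h'.
Qed.

Section Main.
Variables (s t : F) (rho : Op (Idx d n)).
Hypotheses (hs : s != 0) (ht : t != 0) (hst : s ^+ 2 + t ^+ 2 = 1).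
Hypotheses (st : is_state rho) (zm : zero_mean rho).

Local Notation Xi := (charfn rho).
Local Notation S a := (`|charfn rho a| == 1).
Local Notation Pset := (fun a => (charfn rho a != 0) && (`|charfn rho a| != 1)).
Local Notation Mx := (\big[Num.max/0]_(a | Pset a) `|charfn rho a|).

Lemma S_one a : S a -> Xi a = 1.
Proof.
move=> Sa; case: (zm a); rewrite charfn_mean Sa // => X0.
by move: Sa; rewrite X0 normr0 eq_sym oner_eq0.
Qed.

Lemma S_scale a : S a -> forall c, Xi (psc c a) = 1.
Proof. by move=> Sa; apply: charfn_scale1 => //; exact: S_one. Qed.

Lemma nS_scale a c : ~~ S a -> c != 0 -> ~~ S (psc c a).
Proof.
move=> nSa c0; apply: contra nSa => Sca.
have := S_scale Sca c^-1; rewrite pscM mulVf // psc1 => ->; by rewrite normr1.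
Qed.

Lemma Mx_ge0 : 0 <= Mx.
Proof.
apply: (big_ind (fun z => 0 <= z)) => //; try (by move=> *; exact: normr_ge0).
by move=> x y x0 y0; rewrite maxE; case: ifP.
Qed.

Lemma Mx_ub b : Pset b -> `|Xi b| <= Mx.
Proof.
move=> Pb.
apply: (@bigmax_ub _ _ Pset (fun a => `|charfn rho a|)) => //;
  try exact: mem_index_enum; by move=> *; exact: normr_ge0.
Qed.

Lemma Mx_lt1 : (forall a, Pset a -> `|Xi a| < 1) -> Mx < 1.
Proof.
move=> h; apply: (big_ind (fun z => z < 1)); first exact: ltr01.
  by move=> x y x1 y1; rewrite maxE; case: ifP.
exact: h.
Qed.

Definition mm := 1 - magic_gap rho.

Lemma mm_ge0 : 0 <= mm.
Proof.
rewrite /mm /magic_gap; case: ifP => _; last by rewrite subr0 ler01.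
by rewrite opprB addrC subrK; exact: Mx_ge0.
Qed.

Lemma bnd b : ~~ S b -> `|Xi b| <= mm.
Proof.
move=> nSb; rewrite /mm /magic_gap; case: ifP => [_|/negbT /existsPn h].
  by rewrite opprB addrC subrK; case: (eqVneq (Xi b) 0) => [->|nz];
    [rewrite normr0; exact: Mx_ge0 | apply: Mx_ub; rewrite nz nSb].
have := h b; rewrite nSb andbT negbK => /eqP ->; by rewrite normr0 subr0 ler01.
Qed.

Lemma conv_S N a : S a -> charfn (bconv_pow s t N rho) a = 1.
Proof.
elim: N a => [|N IH] a Sa /=; first exact: S_one.
rewrite charfn_bconv // IH; last by rewrite S_scale // normr1.
by rewrite S_scale // mul1r.
Qed.

Lemma conv_nS N a : ~~ S a ->
  `|charfn (bconv_pow s t N rho) a| <= mm ^+ N * `|Xi (psc (s ^+ N) a)|.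
Proof.
elim: N a => [|N IH] a nSa /=; first by rewrite expr0 mul1r psc1.
rewrite charfn_bconv // normrM.
have -> : mm ^+ N.+1 * `|Xi (psc (s ^+ N.+1) a)| = (mm ^+ N * `|Xi (psc (s ^+ N.+1) a)|) * mm.
  by rewrite exprSr mulrAC.
apply: ler_pM; rewrite ?normr_ge0 //.
  by have := IH (psc s a) (nS_scale nSa hs); rewrite pscM -exprSr.
exact: bnd (nS_scale nSa ht).
Qed.

Lemma diff_bnd N a :
  `|charfn (opsub (bconv_pow s t N rho) (meanState rho)) a|
    <= mm ^+ N * `|charfn (opsub rho (meanState rho)) (psc (s ^+ N) a)|.
Proof.
rewrite !charfn_sub !charfn_mean.
case: (boolP (S a)) => Sa.
  rewrite conv_S // S_one // subrr normr0.
  by rewrite mulr_ge0 ?exprn_ge0 ?mm_ge0.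
have nS := nS_scale Sa (expf_neq0 N hs).
by rewrite /= (negbTE nS) !subr0; exact: conv_nS.
Qed.

Lemma HS_bnd N :
  HS (opsub (bconv_pow s t N rho) (meanState rho))
   <= (mm ^+ N) ^+ 2 * HS (opsub rho (meanState rho)).
Proof.
have dn : 0 < ((d ^ n)%N%:R : algC) by rewrite ltr0n expn_gt0 d_gt0.
rewrite -(ler_pM2l dn) mulrCA -!parseval mulr_sumr.
rewrite [X in _ <= X](reindex_inj (psc_inj (expf_neq0 N hs))) /=.
apply: ler_sum => a _; rewrite -exprMn.
apply: lerXn2r; rewrite ?nnegrE ?normr_ge0 ?mulr_ge0 ?exprn_ge0 ?mm_ge0 //.
exact: diff_bnd.
Qed.

Lemma part1 N :
  hsnorm (opsub (bconv_pow s t N rho) (meanState rho))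
      <= (1 - magic_gap rho) ^+ N * hsnorm (opsub rho (meanState rho)).
Proof.
rewrite !hsnormE -/mm.
have m0 : 0 <= mm ^+ N by rewrite exprn_ge0 // mm_ge0.
rewrite -[mm ^+ N in X in _ <= X](sqrCK m0) -sqrtCM ?nnegrE ?exprn_ge0 ?HS_ge0 ?mm_ge0 //.
rewrite ler_sqrtC ?nnegrE ?mulr_ge0 ?exprn_ge0 ?HS_ge0 ?mm_ge0 //; exact: HS_bnd.
Qed.

Lemma part2 : rho <> meanState rho -> 0 < magic_gap rho.
Proof.
move=> neq; rewrite /magic_gap; case: ifP => [_|/negbT /existsPn h].
  rewrite subr_gt0; apply: Mx_lt1 => a /andP [_ n1].
  by rewrite lt_neqAle n1 charfn_le1.
exfalso; apply: neq.
have z : forall a, charfn (opsub rho (meanState rho)) a = 0.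
  move=> a; rewrite charfn_sub charfn_mean; case: ifP => [_|/negbT nS]; first by rewrite subrr.
  by have := h a; rewrite nS andbT negbK => /eqP ->; rewrite subr0.
have HS0 : HS (opsub rho (meanState rho)) = 0.
  have := parseval (opsub rho (meanState rho)).
  rewrite big1 => [|a _]; last by rewrite z normr0 expr2 mulr0.
  move/esym/eqP; rewrite mulf_eq0 pnatr_eq0 expn_eq0 => /orP [/andP [/eqP d0 _]|/eqP //].
  by move: d_gt0; rewrite [X in (0 < X)%N]d0.
apply: functional_extensionality => x; apply: functional_extensionality => y.
have hx := psumr_eq0P (fun x _ => sumr_ge0 _ (fun y _ => exprn_ge0 2 (normr_ge0 _))) HS0 (i := x) isT.
have := psumr_eq0P (fun y _ => exprn_ge0 2 (normr_ge0 _)) hx (i := y) isT.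
move/eqP; rewrite expf_eq0 /= normr_eq0 /opsub subr_eq0 => /eqP //.
Qed.
End Main.
End Proofs.

Lemma d_not2 (d : nat) (s t : 'F_d) :
  s != 0 -> t != 0 -> s ^+ 2 + t ^+ 2 = 1 -> d != 2%N.
Proof.
move=> hs ht hst; apply/eqP => d2; subst d.
by move: s t hs ht hst => [[|[|//]] ps] [[|[|//]] pt] //= _ _.
Qed.

Theorem mainTheorem17 (d n : nat) (s t : 'F_d) (rho : Op (Idx d n)) :
  prime d -> (1 <= n)%N ->
  s != 0 -> t != 0 -> s ^+ 2 + t ^+ 2 = 1 ->
  is_state rho -> zero_mean rho ->
  (forall N : nat,
      hsnorm (opsub (bconv_pow s t N rho) (meanState rho))
      <= (1 - magic_gap rho) ^+ N * hsnorm (opsub rho (meanState rho)))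
  /\ (rho <> meanState rho -> 0 < magic_gap rho).
Proof.
move=> d_pr _ hs ht hst st zm.
have d2 := d_not2 hs ht hst.
split; first by move=> N; exact: part1.
exact: part2.
Qed.
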